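(* A skew-convex function $f\colon X\to K$ is skew invertible if and only if $f(X)\subseteq K^*$ and for every $x\in X$ there exists $a\in K^*$ such that $f({}^{a}x)=a^{-1}$.
   Context: Let $K$ be a skew field, $K^*=K\setminus\{0\}$, and $X$ a nonempty set with a left $K^*$-action $(a,x)\mapsto{}^{a}x$. $\mathcal F(X)$ is the set of functions $X\to K$ with pointwise addition; the constant function with value $a\in K$ is denoted $a$. The skew product is $(f\diamond g)(x)=f({}^{g(x)}x)\,g(x)$ if $g(x)\neq0$ and $0$ if $g(x)=0$. A function $f$ is skew convex if $f\diamond(a+b)=f\diamond a+f\diamond b$ for all $a,b\in K$. $f$ is skew invertible if there is $g\in\mathcal F(X)$ with $f\diamond g=g\diamond f=1$. *)

(* Defs.v *)
From mathcomp Require Import all_boot all_algebra.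
Set Implicit Arguments. Unset Strict Implicit. Unset Printing Implicit Defensive.
Import GRing.Theory.
Local Open Scope ring_scope.

Definition skew_field_axiom (K : unitRingType) : Prop :=
  forall a : K, a != 0 -> a \is a GRing.unit.

(* A left action of K^* on X, given by act : K -> X -> X; only its values
   at nonzero scalars matter. *)
Definition left_Kstar_action (K : unitRingType) (X : Type) (act : K -> X -> X) : Prop :=
  (forall x, act 1 x = x) /\
  (forall (a b : K) x, a != 0 -> b != 0 -> act a (act b x) = act (a * b) x).

Definition skew_prod (K : unitRingType) (X : Type) (act : K -> X -> X)
  (f g : X -> K) : X -> K :=
  fun x => if g x == 0 then 0 else f (act (g x) x) * g x.

Definition cstK (K : unitRingType) (X : Type) (a : K) : X -> K := fun _ => a.
Arguments cstK {K} X a _.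

Definition skew_convex (K : unitRingType) (X : Type) (act : K -> X -> X)
  (f : X -> K) : Prop :=
  forall (a b : K) (x : X),
    skew_prod act f (cstK X (a + b)) x =
    skew_prod act f (cstK X a) x + skew_prod act f (cstK X b) x.

Definition skew_invertible (K : unitRingType) (X : Type) (act : K -> X -> X)
  (f : X -> K) : Prop :=
  exists g : X -> K,
    (forall x, skew_prod act f g x = cstK X 1 x) /\
    (forall x, skew_prod act g f x = cstK X 1 x).

(* Main.v *)
Require Import Defs.
From mathcomp Require Import all_boot all_algebra.
From Stdlib Require Import ClassicalEpsilon.
Import GRing.Theory.
Local Open Scope ring_scope.

Theorem proposition2p10 (K : unitRingType) (X : Type) (act : K -> X -> X)
  (HK : skew_field_axiom K) (HX : inhabited X) (Hact : left_Kstar_action act)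
  (f : X -> K) (Hf : skew_convex act f) :
  skew_invertible act f <->
  ((forall x : X, f x != 0) /\
   (forall x : X, exists a : K, a != 0 /\ f (act a x) = a^-1)).
Proof.
have nz10 : (1 : K) != 0 by exact: oner_neq0.
split.
  case=> g [H1 H2]; split.
    move=> x; move: (H2 x); rewrite /skew_prod /cstK.
    by case: eqP => // _ h; move: nz10; rewrite -h eqxx.
  move=> x; move: (H1 x); rewrite /skew_prod /cstK.
  case: eqP => [_ h|/eqP gx h]; first by move: nz10; rewrite h eqxx.
  exists (g x); split => //.
  have u := HK _ gx.
  by rewrite -[LHS]mulr1 -(mulrV u) mulrA h mul1r.
case=> fnz hex.
have uniq : forall y a b, a != 0 -> b != 0 ->
    f (act a y) = a^-1 -> f (act b y) = b^-1 -> a = b.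
  move=> y a b a0 b0 ha hb.
  apply/eqP; rewrite -subr_eq0; apply/negPn/negP => dab.
  have := Hf (a - b) b y; rewrite /skew_prod /cstK subrK.
  rewrite (negPf a0) (negPf b0) (negPf dab) ha hb.
  rewrite (mulVr (HK _ a0)) (mulVr (HK _ b0)) => /eqP.
  rewrite -subr_eq subrr eq_sym => /eqP h.
  move: (fnz (act (a - b) y)); rewrite -(mulrK (HK _ dab) (f _)) h mul0r.
  by rewrite eqxx.
set g := fun y => proj1_sig (constructive_indefinite_description _ (hex y)).
have gP : forall y, g y != 0 /\ f (act (g y) y) = (g y)^-1.
  by move=> y; rewrite /g; case: constructive_indefinite_description.
exists g; split => x; rewrite /skew_prod /cstK.
  have [g0 gf] := gP x.
  by rewrite (negPf g0) gf (mulVr (HK _ g0)).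
rewrite (negPf (fnz x)).
have fu := HK _ (fnz x).
set y := act (f x) x.
have [g0 gf] := gP y.
have e : g y = (f x)^-1.
  apply: (uniq y) => //.
    by rewrite invr_eq0 fnz.
  rewrite /y (proj2 Hact) ?invr_eq0 ?fnz // (mulVr fu) (proj1 Hact).
  by rewrite invrK.
by rewrite e (mulVr fu).
Qed.
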